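(* Let $f_0,f_1\in \mathrm{PL}_0(\mathbf{I})$ satisfy $[f_1^{f_0},f_0f_1^{-1}]=1$ and $[f_0f_1^{-1},f_1^{f_0^2}]=1$. Let $A=(a,c)$ be an orbital of $f_0$ that is a down-bump, and suppose $(a,c)$ is not an orbital of $f_1$. Let $(b_1,d_1),(b_2,d_2),\dots,(b_n,d_n)$, with $n\ge1$, be all the orbitals of $f_1$ that meet $(a,c)$, in increasing order. Then: (i) $d_n<c$; (ii) there is a point $\rho>a$ such that $f_0|_{[a,\rho]}=f_1|_{[a,\rho]}$; (iii) $b_1=a$; (iv) if $\rho$ is the maximal point such that $f_0|_{[a,\rho]}=f_1|_{[a,\rho]}$, then $d_1f_0\le\rho$; (v) $d_nf_0<d_1$.
   Context: $\mathrm{PL}_0(\mathbf{I})$ is the group of orientation-preserving piecewise-linear homeomorphisms of $[0,1]$ with finitely many points of non-differentiability. Functions act on the right: $tf=f(t)$, $fg=g\circ f$, $a^b=b^{-1}ab$, $[a,b]=aba^{-1}b^{-1}$. The orbitals of $f$ are the connected components (open intervals) of $\operatorname{Supp}(f)=\{x: xf\ne x\}$; an orbital $A$ is a down-bump if $xf<x$ for all $x\in A$. Orbitals are ordered by $A<B$ if every point of $A$ is less than every point of $B$. *)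

(* Defs.v *)
From Stdlib Require Import Reals Lra Lia.
Open Scope R_scope.

(* Elements of PL_0(I) are modelled as functions R -> R that are the
   identity outside [0,1].  f is in PL_0(I) iff it is identity outside [0,1],
   fixes 0 and 1, is strictly increasing on [0,1] (orientation preserving),
   and is affine on each piece of a finite subdivision
   0 = p 0 < p 1 < ... < p k = 1 (finitely many breakpoints).
   Continuity and surjectivity onto [0,1] follow. *)
Definition PL0 (f : R -> R) : Prop :=
  (forall x, (x < 0 \/ 1 < x) -> f x = x) /\
  f 0 = 0 /\ f 1 = 1 /\
  (forall x y, 0 <= x -> x < y -> y <= 1 -> f x < f y) /\
  exists (k : nat) (p : nat -> R),
    p 0%nat = 0 /\ p k = 1 /\
    (forall i, (i < k)%nat -> p i < p (S i)) /\
    (forall i, (i < k)%nat -> exists m q : R,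
        forall x, p i <= x <= p (S i) -> f x = m * x + q).

(* A group element together with its inverse: (function, inverse function). *)
Definition elt : Type := ((R -> R) * (R -> R))%type.

(* Right actions: t(fg) = g(f(t)). *)
Definition mulp (a b : elt) : elt :=
  (fun t => fst b (fst a t), fun t => snd a (snd b t)).
Definition invp (a : elt) : elt := (snd a, fst a).
Definition conjp (a b : elt) : elt := mulp (mulp (invp b) a) b.
Definition commp (a b : elt) : elt := mulp (mulp (mulp a b) (invp a)) (invp b).
Definition is_id (a : elt) : Prop := forall t, 0 <= t <= 1 -> fst a t = t.

Definition inverse_of (f g : R -> R) : Prop :=
  (forall x, g (f x) = x) /\ (forall x, f (g x) = x).

Definition moved (f : R -> R) (x : R) : Prop := f x <> x.

Definition orbital (f : R -> R) (a c : R) : Prop :=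
  a < c /\ (forall x, a < x < c -> moved f x) /\ ~ moved f a /\ ~ moved f c.

Definition down_bump (f : R -> R) (a c : R) : Prop :=
  orbital f a c /\ forall x, a < x < c -> f x < x.

Definition meets (b d a c : R) : Prop := Rmax b a < Rmin d c.

Definition agree_on (f g : R -> R) (a r : R) : Prop :=
  forall x, a <= x <= r -> f x = g x.

(* Main.v *)
Require Import Defs.
From Stdlib Require Import Reals Lra Lia Classical.
Open Scope R_scope.


Definition incr (f : R -> R) := forall x y, x < y -> f x < f y.
Definition RA (f : R -> R) (x : R) :=
  exists e m q, 0 < e /\ 0 < m /\ forall y, x <= y <= x + e -> f y = m * y + q.
Definition nice f fi := inverse_of f fi /\ incr f /\ forall x, RA f x.
Definition cont (f : R -> R) (z : R) := forall e, 0 < e -> exists d, 0 < d /\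
  forall y, Rabs (y - z) < d -> Rabs (f y - f z) < e.

Lemma incr_le f : incr f -> forall x y, x <= y -> f x <= f y.
Proof. intros Hf x y Hxy. destruct (Req_dec x y) as [->|]; [lra|]. left; apply Hf; lra. Qed.

Lemma incr_inj f : incr f -> forall x y, f x = f y -> x = y.
Proof.
  intros Hf x y E. destruct (Rtotal_order x y) as [h|[h|h]]; auto;
  apply Hf in h; lra.
Qed.

Lemma incr_rev f : incr f -> forall x y, f x < f y -> x < y.
Proof.
  intros Hf x y E. destruct (Rlt_le_dec x y) as [h|h]; auto.
  apply (incr_le f Hf) in h. lra.
Qed.

Lemma incr_rev_le f : incr f -> forall x y, f x <= f y -> x <= y.
Proof.
  intros Hf x y E. destruct (Rle_lt_dec x y) as [h|h]; auto.
  apply Hf in h. lra.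
Qed.

Lemma incr_inv f fi : inverse_of f fi -> incr f -> incr fi.
Proof.
  intros [H1 H2] Hf x y Hxy. apply (incr_rev f Hf). rewrite !H2. auto.
Qed.

Lemma RA_of f x : incr f ->
  (exists e m q, 0 < e /\ forall y, x <= y <= x + e -> f y = m * y + q) -> RA f x.
Proof.
  intros Hf (e & m & q & He & Hy). exists e, m, q. repeat split; auto.
  assert (h := Hf x (x + e) ltac:(lra)).
  rewrite (Hy x ltac:(lra)), (Hy (x+e) ltac:(lra)) in h. nra.
Qed.

Lemma nice_inv f fi : nice f fi -> nice fi f.
Proof.
  intros ([H1 H2] & Hf & Hra). assert (Hfi := incr_inv f fi (conj H1 H2) Hf).
  split; [split; auto|split; auto].
  intros y. destruct (Hra (fi y)) as (e & m & q & He & Hm & Hy).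
  exists (m * e), (/ m), (- q / m). repeat split; try nra.
  - apply Rinv_0_lt_compat; auto.
  - intros z Hz. assert (A : fi y <= fi z <= fi y + e).
    { split. apply (incr_le fi Hfi); lra.
      apply (incr_rev_le f Hf). rewrite H2. rewrite Hy by lra.
      assert (y = m * fi y + q) by (rewrite <- (Hy (fi y)) by lra; rewrite H2; auto). nra. }
    specialize (Hy _ A). rewrite H2 in Hy.
    replace (/ m * z + - q / m) with ((z - q)/m) by (field; lra). rewrite Hy at 2. field. lra.
Qed.

Lemma nice_comp f fi g gi : nice f fi -> nice g gi ->
  nice (fun x => f (g x)) (fun x => gi (fi x)).
Proof.
  intros ([F1 F2] & Hf & Rf) ([G1 G2] & Hg & Rg). split; [split|split].
  - intros x. rewrite F1, G1; auto.
  - intros x. rewrite G2, F2; auto.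
  - intros x y h. apply Hf, Hg, h.
  - intros x. destruct (Rg x) as (e1 & m1 & q1 & He1 & Hm1 & Hy1).
    destruct (Rf (g x)) as (e2 & m2 & q2 & He2 & Hm2 & Hy2).
    exists (Rmin e1 (e2 / m1)), (m2 * m1), (m2 * q1 + q2).
    assert (0 < e2 / m1) by (apply Rdiv_lt_0_compat; auto).
    assert (Rmin e1 (e2/m1) <= e1) by apply Rmin_l.
    assert (Rmin e1 (e2/m1) <= e2/m1) by apply Rmin_r.
    assert (m1 * (e2/m1) = e2) by (field; lra).
    repeat split; try nra.
    + apply Rmin_pos; auto.
    + intros y Hy. rewrite (Hy1 y) by lra. rewrite Hy2. ring.
      rewrite (Hy1 x) by lra. split; nra.
Qed.

Lemma nice_cont f fi : nice f fi -> forall z, cont f z.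
Proof.
  intros ([H1 H2] & Hf & _) z e He.
  assert (Hfi := incr_inv f fi (conj H1 H2) Hf).
  assert (A1 : fi (f z - e) < z). { rewrite <- (H1 z) at 2. apply Hfi; lra. }
  assert (A2 : z < fi (f z + e)). { rewrite <- (H1 z) at 1. apply Hfi; lra. }
  exists (Rmin (z - fi (f z - e)) (fi (f z + e) - z)). split.
  apply Rmin_pos; lra.
  intros y Hy. assert (B1 := Rmin_l (z - fi (f z - e)) (fi (f z + e) - z)).
  assert (B2 := Rmin_r (z - fi (f z - e)) (fi (f z + e) - z)).
  assert (C1 : fi (f z - e) < y) by (split_Rabs; lra).
  assert (C2 : y < fi (f z + e)) by (split_Rabs; lra).
  apply Hf in C1. apply Hf in C2. rewrite H2 in C1, C2. split_Rabs; lra.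
Qed.

Lemma fix_closed f z : cont f z ->
  (forall d, 0 < d -> exists y, Rabs (y - z) < d /\ f y = y) -> f z = z.
Proof.
  intros Hc Hd. destruct (Req_dec (f z) z) as [|Hne]; auto. exfalso.
  assert (He : 0 < Rabs (f z - z) / 2).
  { apply Rdiv_lt_0_compat; [apply Rabs_pos_lt; lra|lra]. }
  destruct (Hc _ He) as (d & Hd0 & Hdd).
  destruct (Hd (Rmin d (Rabs (f z - z) / 2))) as (y & Hy & Hfy).
  { apply Rmin_pos; auto. }
  assert (M1 := Rmin_l d (Rabs (f z - z) / 2)).
  assert (M2 := Rmin_r d (Rabs (f z - z) / 2)).
  specialize (Hdd y ltac:(lra)). rewrite Hfy in Hdd.
  revert Hdd Hy M1 M2. split_Rabs; lra.
Qed.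

Lemma lub_approx E T y : is_lub E T -> y < T -> exists x, E x /\ y < x.
Proof.
  intros [Hu Hl] Hy. apply NNPP. intros Hn. assert (T <= y); [|lra].
  apply Hl. intros x Ex. apply Rnot_lt_le. intros h. apply Hn. eauto.
Qed.

Definition is_glb (E : R -> Prop) m :=
  (forall x, E x -> m <= x) /\ (forall b, (forall x, E x -> b <= x) -> b <= m).

Lemma glb_exists E lo : (forall x, E x -> lo <= x) -> (exists x, E x) -> exists m, is_glb E m.
Proof.
  intros Hlo [x0 Ex0].
  destruct (completeness (fun z => E (- z))) as [m [Hu Hl]].
  - exists (- lo). intros z Ez. apply Hlo in Ez. lra.
  - exists (- x0). rewrite Ropp_involutive. auto.
  - exists (- m). split.
    + intros x Ex. assert (- x <= m); [|lra]. apply Hu. rewrite Ropp_involutive; auto.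
    + intros b Hb. assert (m <= - b); [|lra]. apply Hl. intros z Ez. apply Hb in Ez. lra.
Qed.

Lemma glb_approx E m y : is_glb E m -> m < y -> exists x, E x /\ x < y.
Proof.
  intros [Hu Hl] Hy. apply NNPP. intros Hn. assert (y <= m); [|lra].
  apply Hl. intros x Ex. apply Rnot_lt_le. intros h. apply Hn. eauto.
Qed.


Lemma nm f x : ~ moved f x -> f x = x.
Proof. unfold moved. intros h. apply NNPP. auto. Qed.

Lemma orb_l f s t : orbital f s t -> f s = s.
Proof. intros (_&_&h&_). apply nm; auto. Qed.
Lemma orb_r f s t : orbital f s t -> f t = t.
Proof. intros (_&_&_&h). apply nm; auto. Qed.
Lemma orb_lt f s t : orbital f s t -> s < t.
Proof. intros (h&_). auto. Qed.
Lemma orb_mv f s t : orbital f s t -> forall x, s < x < t -> f x <> x.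
Proof. intros (_&h&_). apply h. Qed.

Lemma mk_orb f s t : s < t -> f s = s -> f t = t -> (forall x, s < x < t -> f x <> x) ->
  orbital f s t.
Proof. intros. unfold orbital, moved. repeat split; auto. Qed.

Lemma orb_transport phi phii X Y s t : inverse_of phi phii -> incr phi ->
  (forall y, Y (phi y) = phi (X y)) -> orbital X s t -> orbital Y (phi s) (phi t).
Proof.
  intros [P1 P2] Hp HY Ho. assert (Hpi := incr_inv _ _ (conj P1 P2) Hp).
  apply mk_orb.
  - apply Hp, (orb_lt _ _ _ Ho).
  - rewrite HY, (orb_l _ _ _ Ho); auto.
  - rewrite HY, (orb_r _ _ _ Ho); auto.
  - intros x Hx. rewrite <- (P2 x). rewrite HY. intros E.
    apply (incr_inj _ Hp) in E. revert E. apply (orb_mv _ _ _ Ho).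
    split; apply (incr_rev _ Hp); rewrite P2; lra.
Qed.

Lemma orb_eq f s t s' t' x : orbital f s t -> orbital f s' t' -> s < x < t -> s' < x < t' ->
  s = s' /\ t = t'.
Proof.
  intros O1 O2 H1 H2.
  assert (A : s = s').
  { destruct (Rtotal_order s s') as [h|[h|h]]; auto; exfalso.
    - apply (orb_mv _ _ _ O1 s'). lra. apply (orb_l _ _ _ O2).
    - apply (orb_mv _ _ _ O2 s). lra. apply (orb_l _ _ _ O1). }
  split; auto.
  destruct (Rtotal_order t t') as [h|[h|h]]; auto; exfalso.
  - apply (orb_mv _ _ _ O2 t). lra. apply (orb_r _ _ _ O1).
  - apply (orb_mv _ _ _ O1 t'). lra. apply (orb_r _ _ _ O2).
Qed.

Lemma orb_exists f fi : nice f fi -> forall x lo hi, lo <= x <= hi -> f lo = lo -> f hi = hi ->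
  f x <> x -> exists l h, l < x < h /\ orbital f l h.
Proof.
  intros Hn x lo hi Hx Hlo Hhi Hfx. assert (Hc := nice_cont _ _ Hn).
  set (E := fun y => lo <= y <= x /\ f y = y).
  destruct (completeness E) as [l Hl].
  { exists x. intros y [Ey _]. lra. }
  { exists lo. split; [lra|auto]. }
  set (E2 := fun y => x <= y <= hi /\ f y = y).
  destruct (glb_exists E2 x) as [h Hh].
  { intros y [Ey _]. lra. }
  { exists hi. split; [lra|auto]. }
  assert (Ll : lo <= l <= x).
  { destruct Hl as [Hu Hb]. split. apply Hu. split; [lra|auto]. apply Hb. intros y [Ey _]; lra. }
  assert (Lh : x <= h <= hi).
  { destruct Hh as [Hu Hb]. split. apply Hb. intros y [Ey _]; lra. apply Hu. split; [lra|auto]. }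
  assert (Fl : f l = l).
  { apply fix_closed; auto. intros d Hd.
    destruct (Req_dec l lo) as [->|Hne]. exists lo. split; auto. rewrite Rminus_diag, Rabs_R0; auto.
    destruct (lub_approx E l (l - d) Hl) as (y & [Ey Fy] & Hy). lra.
    exists y. split; auto. assert (y <= l) by (apply (proj1 Hl); split; auto).
    split_Rabs; lra. }
  assert (Fh : f h = h).
  { apply fix_closed; auto. intros d Hd.
    destruct (Req_dec h hi) as [->|Hne]. exists hi. split; auto. rewrite Rminus_diag, Rabs_R0; auto.
    destruct (glb_approx E2 h (h + d) Hh) as (y & [Ey Fy] & Hy). lra.
    exists y. split; auto. assert (h <= y) by (apply (proj1 Hh); split; auto).
    split_Rabs; lra. }
  assert (l <> x) by (intros ->; auto).
  assert (h <> x) by (intros ->; auto).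
  exists l, h. split; [lra|]. apply mk_orb; auto. lra.
  intros y Hy Fy. destruct (Rle_lt_dec y x).
  - assert (y <= l); [|lra]. apply (proj1 Hl). split; [lra|auto].
  - assert (h <= y); [|lra]. apply (proj1 Hh). split; [lra|auto].
Qed.


Lemma tcentral w wi k s t e : nice w wi -> orbital w s t -> 0 < e ->
  (forall y, s <= y <= s + e -> k y = y) ->
  (forall x, s < x < t -> k (w x) = w (k x)) -> forall y, s < y < t -> k y = y.
Proof.
  intros Hn Ho He Hk Hcm.
  pose proof Hn as ([W1 W2] & Hw & _).
  assert (Hwi := incr_inv _ _ (conj W1 W2) Hw).
  assert (Hcw := nice_cont _ _ Hn).
  assert (Hcwi := nice_cont _ _ (nice_inv _ _ Hn)).
  assert (Hst := orb_lt _ _ _ Ho). assert (Ws := orb_l _ _ _ Ho). assert (Wt := orb_r _ _ _ Ho).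
  assert (Wis : wi s = s) by (rewrite <- Ws at 1; auto).
  set (E := fun x => s <= x <= t /\ forall y, s <= y <= x -> k y = y).
  set (e' := Rmin e (t - s)).
  assert (He' : 0 < e') by (apply Rmin_pos; lra).
  assert (e'1 : e' <= e) by apply Rmin_l. assert (e'2 : e' <= t - s) by apply Rmin_r.
  destruct (completeness E) as [T HT].
  { exists t. intros x [Ex _]. lra. }
  { exists s. split. lra. intros y Hy. apply Hk. lra. }
  assert (T1 : s + e' <= T).
  { apply (proj1 HT). split. lra. intros y Hy. apply Hk. lra. }
  assert (T2 : T <= t). { apply (proj2 HT). intros x [Ex _]. lra. }
  assert (Below : forall y, s <= y < T -> k y = y).
  { intros y Hy. destruct (lub_approx E T y HT) as (x & [Ex1 Ex2] & Hx); [lra|].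
    apply Ex2. lra. }
  assert (TT : T = t).
  { destruct (Req_dec T t) as [|Hne]; auto. exfalso.
    assert (WT : w T <> T) by (apply (orb_mv _ _ _ Ho); lra).
    assert (Ext : forall d, 0 < d -> (forall y, T <= y < T + d -> y < t -> k y = y) -> False).
    { intros d Hd Hy. set (d' := Rmin d (t - T)).
      assert (0 < d') by (apply Rmin_pos; lra).
      assert (d' <= d) by apply Rmin_l. assert (d' <= t - T) by apply Rmin_r.
      assert (T + d'/2 <= T); [|lra]. apply (proj1 HT). split. lra.
      intros y Hy'. destruct (Rlt_le_dec y T). apply Below; lra. apply Hy; lra. }
    destruct (Rlt_le_dec (w T) T) as [Hlt|Hge].
    - destruct (Hcw T (T - w T)) as (d & Hd & Hdd). lra.
      apply (Ext d Hd). intros y Hy Hyt.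
      assert (A : w y < T). { specialize (Hdd y ltac:(split_Rabs; lra)). split_Rabs; lra. }
      assert (B : s < w y). { rewrite <- Ws. apply Hw. lra. }
      assert (C : k (w y) = w y) by (apply Below; lra).
      rewrite Hcm in C by lra. apply (incr_inj _ Hw) in C. auto.
    - assert (Hwi_T : wi T < T).
      { destruct (Rlt_le_dec (wi T) T) as [h|h]; auto. apply (incr_le _ Hw) in h.
        rewrite W2 in h. lra. }
      destruct (Hcwi T (T - wi T)) as (d & Hd & Hdd). lra.
      apply (Ext d Hd). intros y Hy Hyt.
      assert (A : wi y < T). { specialize (Hdd y ltac:(split_Rabs; lra)). split_Rabs; lra. }
      assert (B : s < wi y). { rewrite <- Wis. apply Hwi. lra. }
      assert (C : k (wi y) = wi y) by (apply Below; lra).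
      assert (D := Hcm (wi y) ltac:(lra)). rewrite W2, C, W2 in D. auto. }
  intros y Hy. apply Below. lra.
Qed.

Lemma lc w wi k ki s t : nice w wi -> orbital w s t -> nice k ki ->
  (forall x, s < x < t -> k (w x) = w (k x)) ->
  (exists p, s < p < t /\ k p = p) -> forall y, s < y < t -> k y = y.
Proof.
  intros Hn Ho Hkn Hcm [p [Hp Kp]].
  pose proof Hn as ([W1 W2] & Hw & _).
  assert (Hwi := incr_inv _ _ (conj W1 W2) Hw).
  assert (Hck := nice_cont _ _ Hkn).
  assert (Hst := orb_lt _ _ _ Ho). assert (Ws := orb_l _ _ _ Ho). assert (Wt := orb_r _ _ _ Ho).
  assert (Wis : wi s = s) by (rewrite <- Ws at 1; auto).
  assert (Wit : wi t = t) by (rewrite <- Wt at 1; auto).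
  set (P := fun x => s < x < t /\ k x = x).
  destruct (glb_exists P s) as [m Hm].
  { intros x [Px _]. lra. } { exists p. split; auto. }
  assert (M1 : s <= m). { apply (proj2 Hm). intros x [Px _]. lra. }
  assert (M2 : m <= p). { apply (proj1 Hm). split; auto. }
  assert (Km : k m = m).
  { apply fix_closed; auto. intros d Hd.
    destruct (glb_approx P m (m + d) Hm) as (y & [Py Ky] & Hy). lra.
    exists y. split; auto. assert (m <= y) by (apply (proj1 Hm); split; auto).
    split_Rabs; lra. }
  assert (Ms : m = s).
  { destruct (Req_dec m s) as [|Hne]; auto. exfalso.
    assert (Pm : P m) by (split; [lra|auto]).
    assert (WM : w m <> m) by (apply (orb_mv _ _ _ Ho); lra).
    destruct (Rlt_le_dec (w m) m) as [Hlt|Hge].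
    + assert (s < w m) by (rewrite <- Ws; apply Hw; lra).
      assert (P (w m)). { split. lra. rewrite Hcm by lra. rewrite Km; auto. }
      assert (m <= w m) by (apply (proj1 Hm); auto). lra.
    + assert (wi m < m).
      { destruct (Rlt_le_dec (wi m) m) as [h|h]; auto. apply (incr_le _ Hw) in h.
        rewrite W2 in h. lra. }
      assert (s < wi m) by (rewrite <- Wis; apply Hwi; lra).
      assert (P (wi m)).
      { split. lra. assert (D := Hcm (wi m) ltac:(lra)). rewrite W2, Km in D.
        apply (incr_inj _ Hw). rewrite W2. symmetry; exact D. }
      assert (m <= wi m) by (apply (proj1 Hm); auto). lra. }
  subst m.
  destruct Hkn as (_ & _ & Hra). destruct (Hra s) as (e & a1 & b1 & He & Ha & Hy).
  destruct (glb_approx P s (s + e) Hm) as (q & [Pq Kq] & Hq). lra.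
  assert (E1 : a1 * s + b1 = s) by (rewrite <- Hy; auto; lra).
  assert (E2 : a1 * q + b1 = q) by (rewrite <- Hy; auto; lra).
  assert (a1 = 1) by (apply (Rmult_eq_reg_r (q - s)); [|lra]; nra).
  assert (b1 = 0) by nra.
  apply (tcentral w wi k s t e); auto.
  intros y Hy'. rewrite Hy; auto. subst; ring.
Qed.

Lemma col1 U Ui H Hi s t x : nice U Ui -> nice H Hi ->
  (forall z, H (U z) = U (H z)) -> orbital U s t -> s < x < t -> H x <> x ->
  (exists lo hi, lo <= x <= hi /\ H lo = lo /\ H hi = hi) ->
  exists l h, orbital H l h /\ l = s /\ h = t.
Proof.
  intros NU NH Hcm Ho Hx Hm (lo & hi & Hlh & Hlo & Hhi).
  destruct (orb_exists H Hi NH x lo hi Hlh Hlo Hhi Hm) as (l & h & Hlx & Ol).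
  assert (Hall : forall y, s < y < t -> H y <> y).
  { intros y Hy Fy. apply Hm. apply (lc U Ui H Hi s t NU Ho NH (fun z _ => Hcm z)).
    exists y; auto. lra. }
  assert (Uall : forall y, l < y < h -> U y <> y).
  { intros y Hy Fy. apply (orb_mv _ _ _ Ho x Hx).
    apply (lc H Hi U Ui l h NH Ol NU (fun z _ => eq_sym (Hcm z))).
    exists y; auto. lra. }
  exists l, h. split; auto.
  assert (Hs := orb_l _ _ _ Ho). assert (Ht := orb_r _ _ _ Ho).
  assert (Hl := orb_l _ _ _ Ol). assert (Hh := orb_r _ _ _ Ol).
  split.
  - destruct (Rtotal_order l s) as [c|[c|c]]; auto; exfalso.
    + apply (Uall s); [lra|auto].
    + apply (Hall l); [lra|auto].
  - destruct (Rtotal_order h t) as [c|[c|c]]; auto; exfalso.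
    + apply (Hall h); [lra|auto].
    + apply (Uall t); [lra|auto].
Qed.

Lemma col U Ui V Vi H Hi s1 t1 s2 t2 x : nice U Ui -> nice V Vi -> nice H Hi ->
  (forall z, H (U z) = U (H z)) -> (forall z, H (V z) = V (H z)) ->
  orbital U s1 t1 -> orbital V s2 t2 -> s1 < x < t1 -> s2 < x < t2 -> H x <> x ->
  (exists lo hi, lo <= x <= hi /\ H lo = lo /\ H hi = hi) -> s1 = s2 /\ t1 = t2.
Proof.
  intros NU NV NH C1 C2 O1 O2 X1 X2 Hm Hlh.
  destruct (col1 U Ui H Hi s1 t1 x) as (l & h & Ol & -> & ->); auto.
  destruct (col1 V Vi H Hi s2 t2 x) as (l' & h' & Ol' & -> & ->); auto.
  apply (orb_eq H _ _ _ _ x); auto.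
Qed.

Lemma germ_comm A B s : RA A s -> RA B s -> A s = s -> B s = s ->
  exists d, 0 < d /\ forall y, s <= y <= s + d -> A (B y) = B (A y).
Proof.
  intros (e1 & l & q1 & He1 & Hl & HA) (e2 & m & q2 & He2 & Hm & HB) As Bs.
  rewrite HA in As by lra. rewrite HB in Bs by lra.
  set (d := Rmin (Rmin e1 e2) (Rmin (e1 / m) (e2 / l))).
  assert (0 < e1 / m) by (apply Rdiv_lt_0_compat; auto).
  assert (0 < e2 / l) by (apply Rdiv_lt_0_compat; auto).
  assert (0 < d) by (repeat apply Rmin_pos; auto).
  assert (D1 : d <= e1) by (unfold d; eapply Rle_trans; [apply Rmin_l|apply Rmin_l]).
  assert (D2 : d <= e2) by (unfold d; eapply Rle_trans; [apply Rmin_l|apply Rmin_r]).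
  assert (D3 : d <= e1 / m) by (unfold d; eapply Rle_trans; [apply Rmin_r|apply Rmin_l]).
  assert (D4 : d <= e2 / l) by (unfold d; eapply Rle_trans; [apply Rmin_r|apply Rmin_r]).
  assert (m * (e1 / m) = e1) by (field; lra).
  assert (l * (e2 / l) = e2) by (field; lra).
  exists d. split; auto. intros y Hy.
  rewrite (HB y) by lra. rewrite (HA y) by lra.
  rewrite HA by nra. rewrite HB by nra. nra.
Qed.

Lemma last_orb_eq Y s1 t1 s2 t2 c : orbital Y s1 t1 -> orbital Y s2 t2 -> t1 <= c -> t2 <= c ->
  (forall z, t1 <= z <= c -> Y z = z) -> (forall z, t2 <= z <= c -> Y z = z) -> t1 = t2.
Proof.
  intros O1 O2 T1 T2 I1 I2.
  assert (L1 := orb_lt _ _ _ O1). assert (L2 := orb_lt _ _ _ O2).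
  destruct (Rtotal_order t1 t2) as [h|[h|h]]; auto; exfalso.
  - apply (orb_mv _ _ _ O2 ((Rmax t1 s2 + t2)/2)).
    + assert (Rmax t1 s2 < t2) by (apply Rmax_lub_lt; lra).
      assert (s2 <= Rmax t1 s2) by apply Rmax_r. lra.
    + assert (Rmax t1 s2 < t2) by (apply Rmax_lub_lt; lra).
      assert (t1 <= Rmax t1 s2) by apply Rmax_l. apply I1. lra.
  - apply (orb_mv _ _ _ O1 ((Rmax t2 s1 + t1)/2)).
    + assert (Rmax t2 s1 < t1) by (apply Rmax_lub_lt; lra).
      assert (s1 <= Rmax t2 s1) by apply Rmax_r. lra.
    + assert (Rmax t2 s1 < t1) by (apply Rmax_lub_lt; lra).
      assert (t2 <= Rmax t2 s1) by apply Rmax_l. apply I2. lra.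
Qed.


Lemma PL0_out f : PL0 f -> forall x, (x < 0 \/ 1 < x) -> f x = x.
Proof. intros (h&_). auto. Qed.
Lemma PL0_0 f : PL0 f -> f 0 = 0.
Proof. intros (_&h&_). auto. Qed.
Lemma PL0_1 f : PL0 f -> f 1 = 1.
Proof. intros (_&_&h&_). auto. Qed.

Lemma PL0_incr f : PL0 f -> incr f.
Proof.
  intros (Ho & H0 & H1 & Hi & _).
  assert (In : forall x, 0 <= x <= 1 -> 0 <= f x <= 1).
  { intros x Hx. split.
    - destruct (Req_dec x 0) as [->|]; [lra|]. rewrite <- H0. left; apply Hi; lra.
    - destruct (Req_dec x 1) as [->|]; [lra|]. rewrite <- H1. left; apply Hi; lra. }
  intros x y Hxy.
  destruct (Rlt_le_dec x 0) as [hx|hx].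
  - rewrite (Ho x) by lra. destruct (Rlt_le_dec y 0) as [hy|hy].
    + rewrite Ho by lra. lra.
    + destruct (Rle_lt_dec y 1) as [hy'|hy']. specialize (In y ltac:(lra)). lra.
      rewrite (Ho y) by lra. lra.
  - destruct (Rle_lt_dec x 1) as [hx'|hx'].
    + destruct (Rle_lt_dec y 1) as [hy'|hy']. apply Hi; lra.
      rewrite (Ho y) by lra. specialize (In x ltac:(lra)). lra.
    + rewrite (Ho x), (Ho y) by lra. lra.
Qed.

Lemma part_find (p : nat -> R) k x : p 0%nat <= x ->
  forall j, (j <= k)%nat -> x < p j -> exists i, (i < j)%nat /\ p i <= x < p (S i).
Proof.
  intros H0 j. induction j as [|j IH]; intros Hj Hx.
  - lra.
  - destruct (Rlt_le_dec x (p j)) as [h|h].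
    + destruct (IH ltac:(lia) h) as (i & Hi & Hp). exists i. split; [lia|auto].
    + exists j. split; [lia|]. lra.
Qed.

Lemma PL0_RA f : PL0 f -> forall x, RA f x.
Proof.
  intros Hf x. apply RA_of; [apply PL0_incr; auto|].
  destruct (Rlt_le_dec x 0) as [h|h].
  - exists (- x / 2), 1, 0. split. lra. intros y Hy. rewrite PL0_out; auto; lra.
  - destruct (Rle_lt_dec 1 x) as [h'|h'].
    + exists 1, 1, 0. split. lra. intros y Hy.
      destruct (Req_dec y 1) as [->|]. rewrite PL0_1; auto; lra. rewrite PL0_out; auto; lra.
    + destruct Hf as (_ & _ & _ & _ & k & p & P0 & Pk & Pinc & Paff).
      destruct (part_find p k x ltac:(lra) k (le_n _) ltac:(lra)) as (i & Hi & Hp).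
      destruct (Paff i Hi) as (m & q & Hmq).
      exists (p (S i) - x), m, q. split. lra. intros y Hy. apply Hmq. lra.
Qed.

Lemma PL0_nice f g : PL0 f -> inverse_of f g -> nice f g.
Proof. intros Hf Hg. split; [auto|split]. apply PL0_incr; auto. apply PL0_RA; auto. Qed.

Lemma PL0_inv_out f g : PL0 f -> inverse_of f g -> forall x, (x < 0 \/ 1 < x) -> g x = x.
Proof. intros Hf [G1 G2] x Hx. rewrite <- (PL0_out f Hf x Hx) at 1. auto. Qed.

Lemma PL0_orb f s t : PL0 f -> orbital f s t -> 0 <= s /\ t <= 1.
Proof.
  intros Hf Ho. assert (L := orb_lt _ _ _ Ho). split.
  - destruct (Rle_lt_dec 0 s) as [|h]; auto. exfalso.
    apply (orb_mv _ _ _ Ho ((s + Rmin 0 t)/2)).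
    + assert (Rmin 0 t <= t) by apply Rmin_r. assert (s < Rmin 0 t) by (apply Rmin_glb_lt; lra). lra.
    + apply PL0_out; auto. left. assert (Rmin 0 t <= 0) by apply Rmin_l. lra.
  - destruct (Rle_lt_dec t 1) as [|h]; auto. exfalso.
    apply (orb_mv _ _ _ Ho ((t + Rmax 1 s)/2)).
    + assert (s <= Rmax 1 s) by apply Rmax_r. assert (Rmax 1 s < t) by (apply Rmax_lub_lt; lra). lra.
    + apply PL0_out; auto. right. assert (1 <= Rmax 1 s) by apply Rmax_l. assert (Rmax 1 s < t) by (apply Rmax_lub_lt; lra). lra.
Qed.


Lemma out_all f0 g0 f1 g1 : PL0 f0 -> PL0 f1 -> inverse_of f0 g0 -> inverse_of f1 g1 ->
  forall t, ~ (0 <= t <= 1) -> f0 t = t /\ g0 t = t /\ f1 t = t /\ g1 t = t.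
Proof.
  intros H0 H1 G0 G1 t Ht. assert (t < 0 \/ 1 < t) by lra.
  repeat split; [apply PL0_out|apply (PL0_inv_out f0)|apply PL0_out|apply (PL0_inv_out f1)]; auto.
Qed.

Lemma rel1 f0 g0 f1 g1 : PL0 f0 -> PL0 f1 -> inverse_of f0 g0 -> inverse_of f1 g1 ->
  is_id (commp (conjp (f1, g1) (f0, g0)) (mulp (f0, g0) (invp (f1, g1)))) ->
  forall t, g1 (f0 (f0 (f1 (g0 t)))) = f0 (f1 (g0 (g1 (f0 t)))).
Proof.
  intros H0 H1 [A0 B0] [A1 B1] R t.
  unfold is_id, commp, conjp, mulp, invp in R. simpl in R.
  destruct (classic (0 <= t <= 1)) as [Ht|Ht].
  - specialize (R t Ht).
    apply (f_equal f0) in R. rewrite B0 in R. apply (f_equal g1) in R. rewrite A1 in R.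
    apply (f_equal g0) in R. rewrite A0 in R. apply (f_equal f1) in R. rewrite B1 in R.
    apply (f_equal f0) in R. rewrite B0 in R. auto.
  - destruct (out_all f0 g0 f1 g1 H0 H1 (conj A0 B0) (conj A1 B1) t Ht) as (a&b&c&d).
    rewrite ?a, ?b, ?c, ?d. rewrite ?a, ?b, ?c, ?d. rewrite ?a, ?b, ?c, ?d. auto.
Qed.

Lemma rel2 f0 g0 f1 g1 : PL0 f0 -> PL0 f1 -> inverse_of f0 g0 -> inverse_of f1 g1 ->
  is_id (commp (mulp (f0, g0) (invp (f1, g1))) (conjp (f1, g1) (mulp (f0, g0) (f0, g0)))) ->
  forall t, g1 (f0 (f0 (f0 (f1 (g0 (g0 t)))))) = f0 (f0 (f1 (g0 (g0 (g1 (f0 t)))))).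
Proof.
  intros H0 H1 [A0 B0] [A1 B1] R t.
  unfold is_id, commp, conjp, mulp, invp in R. simpl in R.
  destruct (classic (0 <= t <= 1)) as [Ht|Ht].
  - specialize (R t Ht).
    apply (f_equal g0) in R. rewrite A0 in R. apply (f_equal g0) in R. rewrite A0 in R.
    apply (f_equal f1) in R. rewrite B1 in R.
    apply (f_equal f0) in R. rewrite B0 in R. apply (f_equal f0) in R. rewrite B0 in R.
    apply (f_equal f0) in R. rewrite B0 in R. apply (f_equal g1) in R. rewrite A1 in R. auto.
  - destruct (out_all f0 g0 f1 g1 H0 H1 (conj A0 B0) (conj A1 B1) t Ht) as (a&b&c&d).
    repeat (rewrite ?a, ?b, ?c, ?d). auto.
Qed.


Section Main.
Variables f0 g0 f1 g1 : R -> R.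
Hypothesis Hf0 : PL0 f0.
Hypothesis Hf1 : PL0 f1.
Hypothesis Hg0 : inverse_of f0 g0.
Hypothesis Hg1 : inverse_of f1 g1.
Hypothesis R1 : forall t, g1 (f0 (f0 (f1 (g0 t)))) = f0 (f1 (g0 (g1 (f0 t)))).
Hypothesis R2 : forall t, g1 (f0 (f0 (f0 (f1 (g0 (g0 t)))))) = f0 (f0 (f1 (g0 (g0 (g1 (f0 t)))))).
Variables a c : R.
Hypothesis HA : down_bump f0 a c.
Hypothesis HnotA : ~ orbital f1 a c.
Variable n : nat.
Variables b d : nat -> R.
Hypothesis Hn : (1 <= n)%nat.
Hypothesis Horb : forall i, (1 <= i <= n)%nat -> orbital f1 (b i) (d i) /\ meets (b i) (d i) a c.
Hypothesis Hincr : forall i, (1 <= i < n)%nat -> d i <= b (S i).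
Hypothesis Hall : forall b' d', orbital f1 b' d' -> meets b' d' a c ->
            exists i, (1 <= i <= n)%nat /\ b' = b i /\ d' = d i.

Definition H x := g1 (f0 x).
Definition Hi x := g0 (f1 x).
Definition U x := f0 (f1 (g0 x)).
Definition Ui x := f0 (g1 (g0 x)).
Definition V x := f0 (U (g0 x)).
Definition Vi x := f0 (Ui (g0 x)).
Definition W x := f0 (V (g0 x)).

Lemma A0 x : g0 (f0 x) = x. Proof. apply Hg0. Qed.
Lemma B0 x : f0 (g0 x) = x. Proof. apply Hg0. Qed.
Lemma A1 x : g1 (f1 x) = x. Proof. apply Hg1. Qed.
Lemma B1 x : f1 (g1 x) = x. Proof. apply Hg1. Qed.

Lemma N0 : nice f0 g0. Proof. apply PL0_nice; auto. Qed.
Lemma N1 : nice f1 g1. Proof. apply PL0_nice; auto. Qed.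
Lemma NH : nice H Hi.
Proof. apply (nice_comp g1 f1 f0 g0); [apply nice_inv, N1|apply N0]. Qed.
Lemma NU : nice U Ui.
Proof.
  apply (nice_comp f0 g0 (fun x => f1 (g0 x)) (fun x => f0 (g1 x))); [apply N0|].
  apply (nice_comp f1 g1 g0 f0); [apply N1|apply nice_inv, N0].
Qed.
Lemma NV : nice V Vi.
Proof.
  apply (nice_comp f0 g0 (fun x => U (g0 x)) (fun x => f0 (Ui x))); [apply N0|].
  apply (nice_comp U Ui g0 f0); [apply NU|apply nice_inv, N0].
Qed.

Lemma I0 : incr f0. Proof. apply PL0_incr; auto. Qed.
Lemma I1 : incr f1. Proof. apply PL0_incr; auto. Qed.
Lemma Ig0 : incr g0. Proof. apply (incr_inv f0); auto. apply I0. Qed.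
Lemma Ig1 : incr g1. Proof. apply (incr_inv f1); auto. apply I1. Qed.

Lemma UF y : U (f0 y) = f0 (f1 y). Proof. unfold U. rewrite A0. auto. Qed.
Lemma VF y : V (f0 y) = f0 (U y). Proof. unfold V. rewrite A0. auto. Qed.
Lemma WF y : W (f0 y) = f0 (V y). Proof. unfold W. rewrite A0. auto. Qed.
Lemma VG y : V (f1 y) = f1 (U y).
Proof.
  unfold V. assert (E := R1 (g0 (f1 y))). rewrite B0, A1 in E.
  apply (f_equal f1) in E. rewrite B1 in E. exact E.
Qed.
Lemma WG y : W (f1 y) = f1 (V y).
Proof.
  unfold W, V, U. assert (E := R2 (g0 (f1 y))). rewrite B0, A1 in E.
  apply (f_equal f1) in E. rewrite B1 in E. exact E.
Qed.
Lemma CU z : H (U z) = U (H z).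
Proof. unfold H, U. apply R1. Qed.
Lemma CV z : H (V z) = V (H z).
Proof. unfold H, V, U. apply R2. Qed.

Lemma H0 : H 0 = 0.
Proof. unfold H. rewrite PL0_0 by auto. rewrite <- (PL0_0 f1 Hf1) at 1. apply A1. Qed.
Lemma H1' : H 1 = 1.
Proof. unfold H. rewrite PL0_1 by auto. rewrite <- (PL0_1 f1 Hf1) at 1. apply A1. Qed.
Lemma Hlohi x : 0 <= x <= 1 -> exists lo hi, lo <= x <= hi /\ H lo = lo /\ H hi = hi.
Proof. intros. exists 0, 1. split; auto. split; [apply H0|apply H1']. Qed.

Lemma Hfix y : H y = y <-> f1 y = f0 y.
Proof.
  unfold H. split; intros E.
  - rewrite <- E at 1. apply B1.
  - rewrite <- E. apply A1.
Qed.

Lemma orbU s t : orbital f1 s t -> orbital U (f0 s) (f0 t).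
Proof. intros. apply (orb_transport f0 g0 f1 U); auto. apply I0. apply UF. Qed.
Lemma orbV s t : orbital U s t -> orbital V (f0 s) (f0 t).
Proof. intros. apply (orb_transport f0 g0 U V); auto. apply I0. apply VF. Qed.
Lemma orbVg s t : orbital U s t -> orbital V (f1 s) (f1 t).
Proof. intros. apply (orb_transport f1 g1 U V); auto. apply I1. apply VG. Qed.
Lemma orbW s t : orbital V s t -> orbital W (f0 s) (f0 t).
Proof. intros. apply (orb_transport f0 g0 V W); auto. apply I0. apply WF. Qed.
Lemma orbWg s t : orbital V s t -> orbital W (f1 s) (f1 t).
Proof. intros. apply (orb_transport f1 g1 V W); auto. apply I1. apply WG. Qed.

Lemma ac : a < c. Proof. destruct HA as [O _]. apply (orb_lt _ _ _ O). Qed.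
Lemma a0 : 0 <= a. Proof. destruct HA as [O _]. apply (PL0_orb f0 a c); auto. Qed.
Lemma c1 : c <= 1. Proof. destruct HA as [O _]. apply (PL0_orb f0 a c); auto. Qed.
Lemma Fa : f0 a = a. Proof. destruct HA as [O _]. apply (orb_l _ _ _ O). Qed.
Lemma Fc : f0 c = c. Proof. destruct HA as [O _]. apply (orb_r _ _ _ O). Qed.
Lemma Fdn x : a < x < c -> f0 x < x. Proof. destruct HA as [_ D]. apply D. Qed.
Lemma Fin x : a < x < c -> a < f0 x < c.
Proof. intros Hx. assert (f0 x < x) by (apply Fdn; auto).
  assert (f0 a < f0 x) by (apply I0; lra). rewrite Fa in *. lra. Qed.

Lemma Ob i : (1 <= i <= n)%nat -> orbital f1 (b i) (d i).
Proof. intros; apply Horb; auto. Qed.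
Lemma Mb i : (1 <= i <= n)%nat -> Rmax (b i) a < Rmin (d i) c.
Proof. intros; apply Horb; auto. Qed.
Lemma Mb1 i : (1 <= i <= n)%nat -> a < d i /\ b i < c.
Proof. intros Hi. assert (M := Mb i Hi).
  assert (b i <= Rmax (b i) a) by apply Rmax_l. assert (a <= Rmax (b i) a) by apply Rmax_r.
  assert (Rmin (d i) c <= d i) by apply Rmin_l. assert (Rmin (d i) c <= c) by apply Rmin_r. lra. Qed.
Lemma bd i : (1 <= i <= n)%nat -> b i < d i.
Proof. intros. apply (orb_lt f1). apply Ob; auto. Qed.

Lemma ord i j : (1 <= i)%nat -> (i < j)%nat -> (j <= n)%nat -> d i <= b j.
Proof.
  intros Hi Hij Hj. induction j as [|j IH]. lia.
  destruct (Nat.eq_dec i j) as [->|Hne]. apply Hincr; lia.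
  assert (d i <= b j) by (apply IH; lia).
  assert (b j < d j) by (apply bd; lia).
  assert (d j <= b (S j)) by (apply Hincr; lia). lra.
Qed.
Lemma b1le i : (1 <= i <= n)%nat -> b 1%nat <= b i.
Proof. intros Hi. destruct (Nat.eq_dec i 1) as [->|]. lra.
  assert (d 1%nat <= b i) by (apply ord; lia). assert (b 1%nat < d 1%nat) by (apply bd; lia). lra. Qed.
Lemma dnle i : (1 <= i <= n)%nat -> d i <= d n.
Proof. intros Hi. destruct (Nat.eq_dec i n) as [->|]. lra.
  assert (d i <= b n) by (apply ord; lia). assert (b n < d n) by (apply bd; lia). lra. Qed.

Lemma GF y : a <= y <= c -> f1 y <> y -> exists i, (1 <= i <= n)%nat /\ b i < y < d i.
Proof.
  intros Hy Hm. assert (L1 := a0). assert (L2 := c1). assert (L3 := ac).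
  destruct (orb_exists f1 g1 N1 y 0 1 ltac:(lra) (PL0_0 f1 Hf1) (PL0_1 f1 Hf1) Hm)
    as (l & h & Hlh & O).
  destruct (Hall l h O) as (i & Hi & -> & ->).
  - unfold meets. unfold Rmax, Rmin. destruct (Rle_dec l a); destruct (Rle_dec h c); [eapply Rle_lt_trans; [apply Hy|apply Hlh]|..]; lra.
  - exists i. split; auto.
Qed.

Lemma f1_in i y : (1 <= i <= n)%nat -> b i < y < d i -> b i < f1 y < d i.
Proof.
  intros Hi Hy. assert (O := Ob i Hi).
  assert (f1 (b i) < f1 y) by (apply I1; lra). assert (f1 y < f1 (d i)) by (apply I1; lra).
  rewrite (orb_l _ _ _ O) in *. rewrite (orb_r _ _ _ O) in *. lra.
Qed.

Lemma endgame s t p : s < p < t -> orbital U s t -> orbital V s t -> f0 s = s -> f1 s = s ->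
  f0 t = t -> f1 t = t -> f0 p = p -> (exists y, s < y < t /\ f0 y <> y) ->
  (exists x, s < x < t /\ H x <> x) -> False.
Proof.
  intros Hp OU OV Fs Gs Ft Gt Fp [y [Hy Fy]] [x [Hx Hxm]].
  assert (Hst : s < t) by lra.
  assert (Hmv : forall z, s < z < t -> H z <> z).
  { intros z Hz Ez. apply Hxm. apply (lc U Ui H Hi s t NU OU NH (fun w _ => CU w)).
    exists z; auto. auto. }
  assert (OH : orbital H s t).
  { apply mk_orb; auto.
    - apply Hfix. rewrite Fs, Gs; auto.
    - apply Hfix. rewrite Ft, Gt; auto. }
  destruct (germ_comm f0 U s) as (dd & Hd & Hc).
  { apply N0. } { apply NU. } { auto. } { apply (orb_l _ _ _ OU). }
  assert (Fsd : s < f0 (s + dd)). { rewrite <- Fs at 1. apply I0. lra. }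
  assert (Gs0 : g0 s = s) by (rewrite <- Fs at 1; apply A0).
  assert (VU : forall z, s <= z <= f0 (s + dd) -> V z = U z).
  { intros z Hz. unfold V. rewrite Hc. rewrite B0; auto.
    split. rewrite <- Gs0. apply (incr_le g0 Ig0); lra.
    rewrite <- (A0 (s + dd)). apply (incr_le g0 Ig0); lra. }
  assert (UiU : forall w, Ui (U w) = w) by (intros; apply (proj1 (proj1 NU))).
  assert (UUi : forall w, U (Ui w) = w) by (intros; apply (proj2 (proj1 NU))).
  assert (CUi : forall w, Ui (H w) = H (Ui w)).
  { intros w. assert (E := CU (Ui w)). rewrite UUi in E. rewrite E, UiU. auto. }
  assert (K : forall z, s < z < t -> Ui (V z) = z).
  { apply (tcentral H Hi (fun z => Ui (V z)) s t (f0 (s + dd) - s) NH OH); [lra| |].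
    - intros z Hz. cbv beta. rewrite VU by lra. apply UiU.
    - intros z Hz. cbv beta. rewrite <- CV, CUi. auto. }
  assert (VU2 : forall z, s < z < t -> V z = U z).
  { intros z Hz. rewrite <- (K z Hz) at 2. rewrite UUi. auto. }
  assert (Fin2 : forall z, s < z < t -> s < f0 z < t).
  { intros z Hz. rewrite <- Fs, <- Ft. split; apply I0; lra. }
  apply Fy. apply (lc U Ui f0 g0 s t NU OU N0).
  - intros z Hz. rewrite <- VF. apply VU2. apply Fin2; auto.
  - exists p. split; auto; lra.
  - auto.
Qed.



Lemma Hmv_f1 x : f0 x = x -> f1 x <> x -> H x <> x.
Proof. intros Fx Hm E. apply Hm. unfold H in E. rewrite Fx in E. rewrite <- E at 1. rewrite B1. auto. Qed.

Lemma in01 x : a <= x <= c -> 0 <= x <= 1.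
Proof. assert (L1 := a0). assert (L2 := c1). lra. Qed.

Lemma b1a : b 1%nat = a.
Proof.
  assert (H1n : (1 <= 1 <= n)%nat) by lia.
  assert (O1 := Ob 1 H1n). destruct (Mb1 1 H1n) as [ad1 b1c].
  assert (Lac := ac).
  destruct (Rtotal_order (b 1%nat) a) as [Hlt|[Heq|Hgt]]; auto; exfalso.
  -
    assert (Ga : f1 a <> a) by (apply (orb_mv _ _ _ O1); lra).
    assert (OU := orbU _ _ O1). assert (OV := orbV _ _ OU).
    assert (Fs : f0 (b 1%nat) < a) by (rewrite <- Fa; apply I0; auto).
    assert (Ft : a < f0 (d 1%nat)) by (rewrite <- Fa; apply I0; auto).
    assert (Fs2 : f0 (f0 (b 1%nat)) < a) by (rewrite <- Fa; apply I0; auto).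
    assert (Ft2 : a < f0 (f0 (d 1%nat))) by (rewrite <- Fa; apply I0; auto).
    destruct (col U Ui V Vi H Hi _ _ _ _ a NU NV NH CU CV OU OV) as [E1 E2];
      [split; lra|split; lra|apply Hmv_f1; [apply Fa|auto]|apply Hlohi, in01; lra|].
    apply (incr_inj f0 I0) in E1. apply (incr_inj f0 I0) in E2.
    assert (tc : c <= (d 1%nat)).
    { destruct (Rle_lt_dec c (d 1%nat)) as [|h]; auto. exfalso.
      assert (f0 (d 1%nat) < (d 1%nat)) by (apply Fdn; lra). lra. }
    rewrite <- E1, <- E2 in OU. rewrite <- E1, <- E2 in OV.
    rewrite <- !E1, <- !E2 in OV.
    apply (endgame (b 1%nat) (d 1%nat) a).
    + split; lra.
    + exact OU.
    + exact OV.
    + symmetry; exact E1.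
    + apply (orb_l _ _ _ O1).
    + symmetry; exact E2.
    + apply (orb_r _ _ _ O1).
    + apply Fa.
    + exists ((a + c)/2). split. lra. assert (f0 ((a+c)/2) < (a+c)/2) by (apply Fdn; lra). lra.
    + exists a. split. lra. apply Hmv_f1; [apply Fa|auto].
  -
    assert (Gfix : forall y, a <= y <= b 1%nat -> f1 y = y).
    { intros y Hy. destruct (Req_dec (f1 y) y) as [|Hm]; auto. exfalso.
      destruct (GF y) as (i & Hi & Hb); auto. lra.
      assert (b 1%nat <= b i) by (apply b1le; auto). lra. }
    assert (Hp1 : a < f0 (b 1%nat) < c) by (apply Fin; lra).
    assert (Hp2 : f0 (b 1%nat) < b 1%nat) by (apply Fdn; lra).
    assert (Hpq : f0 (b 1%nat) < f0 (d 1%nat)) by (apply I0; apply bd; auto).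
    assert (R1' := Rmin_l (f0 (d 1%nat)) (b 1%nat)). assert (R2' := Rmin_r (f0 (d 1%nat)) (b 1%nat)).
    assert (Rl : f0 (b 1%nat) < Rmin (f0 (d 1%nat)) (b 1%nat)) by (apply Rmin_glb_lt; lra).
    remember ((f0 (b 1%nat) + Rmin (f0 (d 1%nat)) (b 1%nat)) / 2) as y.
    assert (Hy : f0 (b 1%nat) < y < Rmin (f0 (d 1%nat)) (b 1%nat)) by lra.
    assert (OU := orbU _ _ O1).
    assert (Uy : U y <> y) by (apply (orb_mv _ _ _ OU); lra).
    assert (Fy : f0 y < y) by (apply Fdn; lra).
    assert (Fy2 : a < f0 y) by (rewrite <- Fa; apply I0; lra).
    assert (Hy' : H y = f0 y).
    { unfold H. rewrite <- (Gfix (f0 y)) at 1 by lra. apply A1. }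
    assert (UHy : U (f0 y) = f0 y). { rewrite UF, Gfix; auto. lra. }
    apply Uy. apply (incr_inj H (proj1 (proj2 NH))).
    rewrite CU, Hy', UHy. auto.
Qed.

Lemma O1a : orbital f1 a (d 1%nat).
Proof. rewrite <- b1a. apply Ob. lia. Qed.
Lemma ad1 : a < d 1%nat.
Proof. apply (orb_lt _ _ _ O1a). Qed.
Lemma d1le1 : d 1%nat <= 1.
Proof. apply (PL0_orb f1 a (d 1%nat) Hf1 O1a). Qed.
Lemma Ga : f1 a = a.
Proof. apply (orb_l _ _ _ O1a). Qed.

Lemma HJ1 : forall y, a < y < f0 (d 1%nat) -> f1 y = f0 y.
Proof.
  assert (O1 := O1a). assert (L1 := ad1). assert (Lac := ac). assert (La0 := a0).
  assert (OU := orbU _ _ O1). rewrite Fa in OU.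
  assert (OV := orbV _ _ OU). rewrite Fa in OV.
  assert (Fd1 : a < f0 (d 1%nat)) by (rewrite <- Fa at 1; apply I0; lra).
  assert (Fd2 : a < f0 (f0 (d 1%nat))) by (rewrite <- Fa at 1; apply I0; lra).
  assert (Fle : f0 (d 1%nat) <= 1).
  { rewrite <- (PL0_1 f0 Hf0). apply (incr_le f0 I0). apply d1le1. }
  destruct (classic (exists p, a < p < f0 (d 1%nat) /\ H p = p)) as [Ex|NEx].
  - intros y Hy. apply Hfix. apply (lc U Ui H Hi a (f0 (d 1%nat)) NU OU NH (fun w _ => CU w) Ex y Hy).
  - exfalso.
    assert (R1' := Rmin_l (f0 (d 1%nat)) (f0 (f0 (d 1%nat)))).
    assert (R2' := Rmin_r (f0 (d 1%nat)) (f0 (f0 (d 1%nat)))).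
    assert (Rl : a < Rmin (f0 (d 1%nat)) (f0 (f0 (d 1%nat)))) by (apply Rmin_glb_lt; lra).
    remember ((a + Rmin (f0 (d 1%nat)) (f0 (f0 (d 1%nat))))/2) as x.
    assert (Hx : a < x < Rmin (f0 (d 1%nat)) (f0 (f0 (d 1%nat)))) by lra.
    assert (Hxm : H x <> x) by (intros E; apply NEx; exists x; split; [lra|auto]).
    destruct (col U Ui V Vi H Hi _ _ _ _ x NU NV NH CU CV OU OV) as [_ E2];
      [split; lra|split; lra|auto|apply Hlohi; lra|].
    apply (incr_inj f0 I0) in E2.
    assert (tc : c <= d 1%nat).
    { destruct (Rle_lt_dec c (d 1%nat)) as [|h]; auto. exfalso.
      assert (f0 (d 1%nat) < d 1%nat) by (apply Fdn; lra). lra. }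
    assert (tc' : c < d 1%nat).
    { destruct (Req_dec c (d 1%nat)) as [E|]; [|lra]. exfalso. apply HnotA. rewrite E. auto. }
    rewrite <- E2 in OU. rewrite <- !E2 in OV.
    apply (endgame a (d 1%nat) c).
    + split; lra.
    + exact OU.
    + exact OV.
    + apply Fa.
    + apply Ga.
    + symmetry; exact E2.
    + apply (orb_r _ _ _ O1).
    + apply Fc.
    + exists ((a + c)/2). split. lra. assert (f0 ((a+c)/2) < (a+c)/2) by (apply Fdn; lra). lra.
    + exists x. split; [lra|auto].
Qed.

Lemma Fd1a : a < f0 (d 1%nat).
Proof. assert (L1 := ad1). rewrite <- Fa at 1; apply I0; lra. Qed.
Lemma Fd1le : f0 (d 1%nat) <= 1.
Proof. rewrite <- (PL0_1 f0 Hf0). apply (incr_le f0 I0). apply d1le1. Qed.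

Lemma part_ii : exists rho, a < rho <= 1 /\ agree_on f0 f1 a rho.
Proof.
  assert (L1 := Fd1a). assert (L2 := Fd1le).
  exists ((a + f0 (d 1%nat))/2). split. lra.
  intros x Hx. destruct (Req_dec x a) as [->|Hne]. rewrite Fa, Ga; auto.
  symmetry. apply HJ1. lra.
Qed.

Lemma part_iv : forall rho, a < rho <= 1 -> agree_on f0 f1 a rho ->
     (forall r, a < r <= 1 -> agree_on f0 f1 a r -> r <= rho) ->
     f0 (d 1%nat) <= rho.
Proof.
  intros rho Hr Hag Hmax. assert (L1 := Fd1a). assert (L2 := Fd1le).
  destruct (Rle_lt_dec (f0 (d 1%nat)) rho) as [|h]; auto. exfalso.
  assert (((rho + f0 (d 1%nat))/2) <= rho); [|lra].
  apply Hmax. lra. intros x Hx.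
  destruct (Req_dec x a) as [->|Hne]. rewrite Fa, Ga; auto.
  symmetry. apply HJ1. lra.
Qed.

Lemma dn_lt_c : d n < c.
Proof.
  assert (Lac := ac). assert (La0 := a0). assert (Lc1 := c1).
  destruct (Rlt_le_dec (d n) c) as [|Hge]; auto. exfalso.
  destruct (Nat.eq_dec n 1) as [En|En].
  - rewrite En in Hge. destruct (Req_dec (d 1%nat) c) as [E|E].
    + apply HnotA. rewrite <- E. exact O1a.
    + assert (Fcd : c < f0 (d 1%nat)) by (rewrite <- Fc at 1; apply I0; lra).
      assert (E1 := HJ1 c ltac:(lra)). rewrite Fc in E1.
      apply (orb_mv _ _ _ O1a c); auto. lra.
  - assert (Hnn : (1 <= n <= n)%nat) by lia.
    assert (bn1 : d 1%nat <= b n) by (apply ord; lia).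
    assert (L1 := ad1). destruct (Mb1 n Hnn) as [_ bnc].
    assert (Fb : a < f0 (b n) < c) by (apply Fin; lra).
    assert (Fb' : f0 (b n) < b n) by (apply Fdn; lra).
    assert (Fb2 : f0 (f0 (b n)) < f0 (b n)) by (apply Fdn; lra).
    assert (On := Ob n Hnn).
    assert (OU := orbU _ _ On). assert (OV := orbV _ _ OU).
    assert (Fdc : c <= f0 (d n)) by (rewrite <- Fc at 1; apply (incr_le f0 I0); lra).
    assert (Fdc2 : c <= f0 (f0 (d n))) by (rewrite <- Fc at 1; apply (incr_le f0 I0); lra).
    assert (Gb : f1 (b n) = b n) by apply (orb_l _ _ _ On).
    destruct (classic (exists p, f0 (b n) < p < f0 (d n) /\ H p = p)) as [Ex|NEx].
    + assert (E := lc U Ui H Hi _ _ NU OU NH (fun w _ => CU w) Ex (b n) ltac:(lra)).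
      apply Hfix in E. lra.
    + destruct (col U Ui V Vi H Hi _ _ _ _ (b n) NU NV NH CU CV OU OV) as [E1 _];
        [split; lra|split; lra|intros E; apply NEx; exists (b n); split; [lra|auto]|apply Hlohi; lra|].
      apply (incr_inj f0 I0) in E1. lra.
Qed.

Lemma Gid : forall y, d n <= y <= c -> f1 y = y.
Proof.
  intros y Hy. destruct (Req_dec (f1 y) y) as [|Hm]; auto. exfalso.
  assert (Hnn : (1 <= n <= n)%nat) by lia. destruct (Mb1 n Hnn) as [adn _].
  destruct (GF y) as (i & Hi & Hb); auto. lra.
  assert (d i <= d n) by (apply dnle; auto). lra.
Qed.

Lemma g0c : g0 c = c. Proof. rewrite <- Fc at 1. apply A0. Qed.
Lemma g1c : g1 c = c.
Proof. assert (E : f1 c = c) by (apply Gid; assert (L:=dn_lt_c); lra). rewrite <- E at 1. apply A1. Qed.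

Lemma Uid : forall x, f0 (d n) <= x <= c -> U x = x.
Proof.
  intros x Hx. unfold U. rewrite Gid. apply B0. split.
  rewrite <- (A0 (d n)). apply (incr_le g0 Ig0); lra.
  rewrite <- g0c. apply (incr_le g0 Ig0); lra.
Qed.

Lemma Vid : forall x, f0 (f0 (d n)) <= x <= c -> V x = x.
Proof.
  intros x Hx. unfold V. rewrite Uid. apply B0. split.
  rewrite <- (A0 (f0 (d n))). apply (incr_le g0 Ig0); lra.
  rewrite <- g0c. apply (incr_le g0 Ig0); lra.
Qed.

Lemma part_v : f0 (d n) < d 1%nat.
Proof.
  assert (Lac := ac). assert (La0 := a0). assert (Lc1 := c1). assert (dnc := dn_lt_c).
  assert (Hnn : (1 <= n <= n)%nat) by lia. destruct (Mb1 n Hnn) as [adn bnc].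
  destruct (Nat.eq_dec n 1) as [En|En].
  - rewrite En in *. apply Fdn. lra.
  - destruct (Rlt_le_dec (f0 (d n)) (d 1%nat)) as [|Hneg]; auto. exfalso.
    assert (Hz1 : a < f0 (d n) < c) by (apply Fin; lra).
    assert (Hz1' : f0 (d n) < d n) by (apply Fdn; lra).
    assert (Hz2 : a < f0 (f0 (d n)) < c) by (apply Fin; lra).
    assert (Hz3 : a < f0 (f0 (f0 (d n))) < c) by (apply Fin; lra).
    assert (bnd : b n < d n) by (apply bd; auto).
    assert (OUn := orbU _ _ (Ob n Hnn)).
    assert (Gc : f1 c = c) by (apply Gid; lra).
    assert (f1c : forall x, x <= c -> f1 x <= c) by (intros x Hx; rewrite <- Gc; apply (incr_le f1 I1); lra).
    assert (g1i : forall x y, x <= y <= c -> g1 x <= g1 y <= c).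
    { intros x y Hxy. split; [apply (incr_le g1 Ig1); lra|]. rewrite <- g1c. apply (incr_le g1 Ig1); lra. }
    assert (C1 : f0 (f0 (d n)) = f1 (f0 (d n))).
    { apply (last_orb_eq V (f0 (f0 (b n))) _ (f1 (f0 (b n))) _ c).
      - apply orbV; auto.
      - apply orbVg; auto.
      - lra.
      - apply f1c; lra.
      - intros z Hz. apply Vid. lra.
      - intros z Hz. rewrite <- (B1 z). rewrite VG. rewrite Uid. auto.
        split. rewrite <- (A1 (f0 (d n))). apply (proj1 (g1i (f1 (f0 (d n))) z ltac:(lra))). apply (proj2 (g1i z z ltac:(lra))). }
    assert (C2 : f0 (f0 (f0 (d n))) = f1 (f0 (f0 (d n)))).
    { apply (last_orb_eq W (f0 (f0 (f0 (b n)))) _ (f1 (f0 (f0 (b n)))) _ c).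
      - apply orbW, orbV; auto.
      - apply orbWg, orbV; auto.
      - lra.
      - apply f1c; lra.
      - intros z Hz. unfold W. rewrite Vid. apply B0. split.
        rewrite <- (A0 (f0 (f0 (d n)))). apply (incr_le g0 Ig0); lra.
        rewrite <- g0c. apply (incr_le g0 Ig0); lra.
      - intros z Hz. rewrite <- (B1 z). rewrite WG. rewrite Vid. auto.
        split. rewrite <- (A1 (f0 (f0 (d n)))). apply (proj1 (g1i (f1 (f0 (f0 (d n)))) z ltac:(lra))). apply (proj2 (g1i z z ltac:(lra))). }
    assert (Gz1 : f1 (f0 (d n)) <> f0 (d n)).
    { intros E. rewrite E in C1. assert (f0 (f0 (d n)) < f0 (d n)) by (apply Fdn; lra). lra. }
    destruct (GF (f0 (d n))) as (j & Hj & Hbj); [lra|auto|].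
    destruct (Nat.eq_dec j 1) as [Ej|Ej]. { subst j. lra. }
    assert (d 1%nat <= b j) by (apply ord; lia).
    assert (L1 := ad1).
    assert (Hbj' : f0 (b j) < b j) by (apply Fdn; lra).
    assert (Hz2j : b j < f0 (f0 (d n)) < d j) by (rewrite C1; apply f1_in; auto).
    assert (Oj := Ob j Hj).
    assert (OUj := orbU _ _ Oj).
    assert (Hz2J : f0 (b j) < f0 (f0 (d n)) < f0 (d j)) by (split; apply I0; lra).
    assert (Hfz2 : H (f0 (f0 (d n))) = f0 (f0 (d n))) by (apply Hfix; auto).
    assert (E := lc U Ui H Hi _ _ NU OUj NH (fun w _ => CU w)
                   (ex_intro _ _ (conj Hz2J Hfz2)) (b j) ltac:(lra)).
    apply Hfix in E. rewrite (orb_l _ _ _ Oj) in E. lra.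
Qed.

Lemma main_all :
  d n < c /\
  (exists rho, a < rho <= 1 /\ agree_on f0 f1 a rho) /\
  b 1%nat = a /\
  (forall rho, a < rho <= 1 -> agree_on f0 f1 a rho ->
     (forall r, a < r <= 1 -> agree_on f0 f1 a r -> r <= rho) ->
     f0 (d 1%nat) <= rho) /\
  f0 (d n) < d 1%nat.
Proof using All.
  split. apply dn_lt_c. split. apply part_ii. split. apply b1a. split. apply part_iv. apply part_v.
Qed.

End Main.

Theorem lemma2p6
  (f0 g0 f1 g1 : R -> R)
  (Hf0 : PL0 f0) (Hf1 : PL0 f1)
  (Hg0 : inverse_of f0 g0) (Hg1 : inverse_of f1 g1)
  (Hrel1 : is_id (commp (conjp (f1, g1) (f0, g0)) (mulp (f0, g0) (invp (f1, g1)))))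
  (Hrel2 : is_id (commp (mulp (f0, g0) (invp (f1, g1)))
                        (conjp (f1, g1) (mulp (f0, g0) (f0, g0)))))
  (a c : R) (HA : down_bump f0 a c) (HnotA : ~ orbital f1 a c)
  (n : nat) (b d : nat -> R) (Hn : (1 <= n)%nat)
  (Horb : forall i, (1 <= i <= n)%nat -> orbital f1 (b i) (d i) /\ meets (b i) (d i) a c)
  (Hincr : forall i, (1 <= i < n)%nat -> d i <= b (S i))
  (Hall : forall b' d', orbital f1 b' d' -> meets b' d' a c ->
            exists i, (1 <= i <= n)%nat /\ b' = b i /\ d' = d i) :
  d n < c /\
  (exists rho, a < rho <= 1 /\ agree_on f0 f1 a rho) /\
  b 1%nat = a /\
  (forall rho, a < rho <= 1 -> agree_on f0 f1 a rho ->
     (forall r, a < r <= 1 -> agree_on f0 f1 a r -> r <= rho) ->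
     f0 (d 1%nat) <= rho) /\
  f0 (d n) < d 1%nat.
Proof.
  exact (main_all f0 g0 f1 g1 Hf0 Hf1 Hg0 Hg1
    (rel1 f0 g0 f1 g1 Hf0 Hf1 Hg0 Hg1 Hrel1) (rel2 f0 g0 f1 g1 Hf0 Hf1 Hg0 Hg1 Hrel2)
    a c HA HnotA n b d Hn Horb Hincr Hall).
Qed.
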